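(* Let $H$ be a diagonal Hamiltonian on $n$ qubits with real diagonal entries $H_{z,z}$, $z\in\{0,1\}^n$. Let $\delta:=\max_{\ell\in\mathbb{R}}|\{z\in\{0,1\}^n: H_{z,z}=\ell\}|/2^n$. Fix arbitrary real parameters $\beta_1,\gamma_1,\beta_2,\gamma_2,\dots$, and for $p\ge 0$ let $\ket{\psi_p}=\sum_z \alpha_{p,z}\ket{z}$ be the QAOA state of depth $p$, $$\ket{\psi_p}=\Big[\prod_{i=1}^{p}U_B(\beta_i)U_C(\gamma_i)\Big]\mathrm{Had}^{\otimes n}\ket{0}^{\otimes n},$$ where $U_C(\gamma)=e^{-i\gamma H}$, $U_B(\beta)=e^{-i\beta\sum_{k=1}^n\sigma_X^k}=(e^{-i\beta\sigma_X})^{\otimes n}$, $\mathrm{Had}$ is the Hadamard gate, and the product is ordered so that $U_B(\beta_1)U_C(\gamma_1)$ is applied first. For $p\ge0$ let $\Delta_p:=\min_{t\le p}\max_{u\in\mathbb{C}}|\{z\in\{0,1\}^n:\alpha_{t,z}=u\}|/2^n$. Then $\Delta_0=1$, and for every $p\ge1$ and every $z\in\{0,1\}^n$, $$|\alpha_{p,z}|\le\big(2^{n+1}(2-\Delta_{p-1}-\delta)+1\big)^{p}\,\frac{1}{\sqrt{2^n}}.$$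
   Context: $\sigma_X^k$ denotes the Pauli X matrix $\begin{pmatrix}0&1\\1&0\end{pmatrix}$ acting on qubit $k$. $\delta$ is the maximum fraction of computational basis states sharing the same diagonal value of $H$; $\Delta_p$ is the minimum over depths $t\le p$ of the maximum fraction of amplitudes of $\ket{\psi_t}$ that are all equal to a common complex value. *)

(* Defs.v *)
From Stdlib Require Import Reals List Arith.
Import ListNotations.
Open Scope R_scope.

Definition C : Type := (R * R)%type.
Definition Cadd (a b : C) : C := (fst a + fst b, snd a + snd b).
Definition Cmul (a b : C) : C :=
  (fst a * fst b - snd a * snd b, fst a * snd b + snd a * fst b).
Definition Cnorm (a : C) : R := sqrt (fst a * fst a + snd a * snd a).
Definition Ceqb (a b : C) : bool :=
  if Req_EM_T (fst a) (fst b) then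
    if Req_EM_T (snd a) (snd b) then true else false
  else false.
Definition Reqb (a b : R) : bool := if Req_EM_T a b then true else false.

(* Basis states z in {0,1}^n are encoded as naturals 0 <= z < 2^n;
   qubit k (0 <= k < n) is bit k of z. A state is a function nat -> C
   (only values on z < 2^n matter). *)
Definition basis (n : nat) : list nat := seq 0 (2 ^ n)%nat.

(* U_C(gamma) = exp(-i gamma H), H diagonal with entries Hd z *)
Definition UC (Hd : nat -> R) (g : R) (psi : nat -> C) : nat -> C :=
  fun z => Cmul (cos (g * Hd z), - sin (g * Hd z)) (psi z).

(* exp(-i beta sigma_X) = cos beta I - i sin beta X acting on qubit k *)
Definition UBk (b : R) (k : nat) (psi : nat -> C) : nat -> C :=
  fun z => Cadd (Cmul (cos b, 0) (psi z))
                (Cmul (0, - sin b) (psi (Nat.lxor z (2 ^ k)%nat))).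

(* U_B(beta) = (exp(-i beta sigma_X))^{tensor n} *)
Definition UB (n : nat) (b : R) (psi : nat -> C) : nat -> C :=
  fold_right (fun k acc => UBk b k acc) psi (seq 0 n).

(* Had^{tensor n} |0...0> : uniform superposition *)
Definition psi0 (n : nat) : nat -> C := fun _ => (1 / sqrt (2 ^ n), 0).

(* QAOA state of depth p; beta i, gamma i used for i = 1..p,
   with U_B(beta_1) U_C(gamma_1) applied first *)
Fixpoint qaoa (n : nat) (Hd : nat -> R) (beta gamma : nat -> R) (p : nat)
  : nat -> C :=
  match p with
  | O => psi0 n
  | S q => UB n (beta (S q)) (UC Hd (gamma (S q)) (qaoa n Hd beta gamma q))
  end.

(* delta = max_l |{z : H_zz = l}| / 2^n  (max attained at some l = H_ww) *)
Definition countR (n : nat) (Hd : nat -> R) (l : R) : nat :=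
  length (filter (fun w => Reqb (Hd w) l) (basis n)).
Definition deltaH (n : nat) (Hd : nat -> R) : R :=
  fold_right Rmax 0
    (map (fun z => INR (countR n Hd (Hd z)) / 2 ^ n) (basis n)).

Definition countC (n : nat) (a : nat -> C) (u : C) : nat :=
  length (filter (fun w => Ceqb (a w) u) (basis n)).
Definition maxfracC (n : nat) (a : nat -> C) : R :=
  fold_right Rmax 0
    (map (fun z => INR (countC n a (a z)) / 2 ^ n) (basis n)).

Definition DeltaQ (n : nat) (Hd : nat -> R) (beta gamma : nat -> R) (p : nat) : R :=
  fold_right Rmin (maxfracC n (qaoa n Hd beta gamma 0))
    (map (fun t => maxfracC n (qaoa n Hd beta gamma t)) (seq 0 (S p))).

(* Main.v *)
Require Import Defs.
From Stdlib Require Import Reals List Arith Lia Lra Permutation.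
From Coquelicot Require Complex.
Import ListNotations.
Import Defs.
Open Scope R_scope.

Definition Csub (a b : C) : C := (fst a - fst b, snd a - snd b).

Lemma Cnorm_Cmod a : Cnorm a = Complex.Cmod a.
Proof. unfold Cnorm, Complex.Cmod. f_equal. simpl. ring. Qed.

Lemma Cnorm_add a b : Cnorm (Cadd a b) <= Cnorm a + Cnorm b.
Proof. rewrite !Cnorm_Cmod. exact (Complex.Cmod_triangle a b). Qed.

Lemma Cnorm_mul a b : Cnorm (Cmul a b) = Cnorm a * Cnorm b.
Proof. rewrite !Cnorm_Cmod. exact (Complex.Cmod_mult a b). Qed.

Lemma Cnorm_ge0 a : 0 <= Cnorm a.
Proof. apply sqrt_pos. Qed.

Lemma Cnorm_sub a b : Cnorm (Csub a b) <= Cnorm a + Cnorm b.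
Proof.
  replace (Csub a b) with (Cadd a (Cmul (-1,0) b)).
  - eapply Rle_trans; [apply Cnorm_add|]. rewrite Cnorm_mul.
    replace (Cnorm (-1,0)) with 1. lra.
    unfold Cnorm; simpl. replace (-1 * -1 + 0 * 0) with 1 by ring. now rewrite sqrt_1.
  - unfold Csub, Cadd, Cmul; simpl. f_equal; ring.
Qed.

Lemma Cnorm_phase x y : Cnorm (x, y) <= 1 -> True. Proof. auto. Qed.

Lemma Cnorm_cs t : Cnorm (cos t, - sin t) = 1.
Proof. unfold Cnorm; simpl. replace (cos t * cos t + - sin t * - sin t) with 1.
  apply sqrt_1. pose proof (sin2_cos2 t). unfold Rsqr in H. lra. Qed.

Lemma Cnorm_le1_re t : Cnorm (cos t, 0) <= 1.
Proof. unfold Cnorm; simpl. rewrite <- sqrt_1. apply sqrt_le_1_alt.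
  pose proof (sin2_cos2 t). unfold Rsqr in H. nra. Qed.

Lemma Cnorm_le1_im t : Cnorm (0, - sin t) <= 1.
Proof. unfold Cnorm; simpl. rewrite <- sqrt_1. apply sqrt_le_1_alt.
  pose proof (sin2_cos2 t). unfold Rsqr in H. nra. Qed.

Fixpoint orb (m s z : nat) : list nat :=
  match m with
  | O => [z]
  | S m => orb m (S s) z ++ orb m (S s) (Nat.lxor z (2 ^ s)%nat)
  end.

Definition sumC (l : list nat) (f : nat -> R) : R :=
  fold_right (fun w acc => f w + acc) 0 l.

Lemma sumC_app l1 l2 f : sumC (l1 ++ l2) f = sumC l1 f + sumC l2 f.
Proof. induction l1; simpl; [ring|]. unfold sumC in *; simpl. rewrite IHl1. ring. Qed.

Lemma sumC_perm l1 l2 f : Permutation l1 l2 -> sumC l1 f = sumC l2 f.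
Proof. induction 1; unfold sumC in *; simpl; try lra. Qed.

Lemma len_filter_perm (P : nat -> bool) l1 l2 : Permutation l1 l2 ->
  length (filter P l1) = length (filter P l2).
Proof. induction 1; simpl; try destruct (P x); try destruct (P y); simpl; lia. Qed.

Fixpoint wp (b : R) (m : nat) : C :=
  match m with O => (1, 0) | S m => Cmul (cos b, - sin b) (wp b m) end.

Lemma wp_norm b m : Cnorm (wp b m) = 1.
Proof. induction m; simpl.
  - unfold Cnorm; simpl. replace (1*1+0*0) with 1 by ring. apply sqrt_1.
  - rewrite Cnorm_mul, IHm, Cnorm_cs. ring. Qed.

Definition G (b : R) (m s : nat) (psi : nat -> C) : nat -> C :=
  fold_right (fun k acc => UBk b k acc) psi (seq s m).

Lemma key b m : forall s psi c z,
  Cnorm (Csub (G b m s psi z) (Cmul (wp b m) c)) <=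
  sumC (orb m s z) (fun w => Cnorm (Csub (psi w) c)).
Proof.
  induction m; intros s psi c z.
  - simpl. unfold sumC; simpl. replace (Cmul (1,0) c) with c.
    + unfold G; simpl. lra.
    + unfold Cmul; destruct c; simpl; f_equal; ring.
  - simpl orb. rewrite sumC_app.
    change (G b (S m) s psi z) with (UBk b s (G b m (S s) psi) z).
    unfold UBk.
    set (X := G b m (S s) psi z).
    set (Y := G b m (S s) psi (Nat.lxor z (2 ^ s))).
    replace (Csub (Cadd (Cmul (cos b, 0) X) (Cmul (0, - sin b) Y)) (Cmul (wp b (S m)) c))
      with (Cadd (Cmul (cos b, 0) (Csub X (Cmul (wp b m) c)))
                 (Cmul (0, - sin b) (Csub Y (Cmul (wp b m) c)))).
    + eapply Rle_trans; [apply Cnorm_add|]. rewrite !Cnorm_mul.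
      pose proof (IHm (S s) psi c z). pose proof (IHm (S s) psi c (Nat.lxor z (2 ^ s))).
      fold X in H. fold Y in H0.
      pose proof (Cnorm_le1_re b). pose proof (Cnorm_le1_im b).
      pose proof (Cnorm_ge0 (Csub X (Cmul (wp b m) c))).
      pose proof (Cnorm_ge0 (Csub Y (Cmul (wp b m) c))).
      pose proof (Cnorm_ge0 (cos b, 0)). pose proof (Cnorm_ge0 (0, - sin b)).
      nra.
    + simpl wp. unfold Csub, Cadd, Cmul; simpl. f_equal; ring.
Qed.

Lemma orb_len m : forall s z, length (orb m s z) = (2 ^ m)%nat.
Proof. induction m; intros; simpl; auto. rewrite length_app, !IHm. lia. Qed.

Lemma lxor_pow_bit z s i : i <> s -> Nat.testbit (Nat.lxor z (2 ^ s)) i = Nat.testbit z i.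
Proof. intro H. rewrite Nat.lxor_spec, Nat.pow2_bits_eqb.
  replace (s =? i) with false. now destruct (Nat.testbit z i).
  symmetry. apply Nat.eqb_neq. lia. Qed.

Lemma orb_bits m : forall s z w, In w (orb m s z) ->
  forall i, (i < s \/ s + m <= i)%nat -> Nat.testbit w i = Nat.testbit z i.
Proof.
  induction m; intros s z w Hw i Hi; simpl in Hw.
  - destruct Hw as [<-|[]]. reflexivity.
  - apply in_app_or in Hw. destruct Hw as [Hw|Hw].
    + apply (IHm _ _ _ Hw). lia.
    + rewrite (IHm _ _ _ Hw) by lia. apply lxor_pow_bit. lia.
Qed.

Lemma orb_nodup m : forall s z, NoDup (orb m s z).
Proof.
  induction m; intros; simpl.
  - constructor; [simpl; tauto| constructor].
  - apply NoDup_app; auto. intros a H1 H2.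
    pose proof (orb_bits _ _ _ _ H1 s ltac:(lia)).
    pose proof (orb_bits _ _ _ _ H2 s ltac:(lia)).
    rewrite H0, Nat.lxor_spec, Nat.pow2_bits_eqb, Nat.eqb_refl in H.
    destruct (Nat.testbit z s); discriminate.
Qed.

Lemma lt_pow2_bits n w : (forall i, (n <= i)%nat -> Nat.testbit w i = false) -> (w < 2 ^ n)%nat.
Proof.
  intro H. destruct (Nat.lt_ge_cases w (2 ^ n)) as [|Hge]; auto.
  assert (w <> 0)%nat by (pose proof (Nat.pow_nonzero 2 n); lia).
  apply Nat.log2_le_pow2 in Hge; [|lia].
  specialize (H _ Hge). rewrite Nat.bit_log2 in H; [discriminate|auto].
Qed.

Lemma orb_perm n z : (z < 2 ^ n)%nat -> Permutation (orb n 0 z) (basis n).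
Proof.
  intro Hz. apply NoDup_Permutation_bis.
  - apply orb_nodup.
  - unfold basis. rewrite length_seq, orb_len. lia.
  - intros w Hw. unfold basis. apply in_seq. split; [lia|].
    simpl. apply lt_pow2_bits. intros i Hi.
    rewrite (orb_bits _ _ _ _ Hw) by lia.
    destruct (Nat.testbit z i) eqn:E; auto.
    exfalso. assert (z <> 0)%nat by (intro; subst; rewrite Nat.bits_0 in E; discriminate).
    assert (i <= Nat.log2 z)%nat. { destruct (Nat.le_gt_cases i (Nat.log2 z)); auto.
      rewrite Nat.bits_above_log2 in E; auto; discriminate. }
    assert (2 ^ i <= z)%nat. apply Nat.log2_le_pow2; lia.
    pose proof (Nat.pow_le_mono_r 2 n i ltac:(lia) Hi). lia.
Qed.

Lemma fold_max_attained (f : nat -> R) l : l <> [] -> (forall x, 0 <= f x) ->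
  exists z, In z l /\ fold_right Rmax 0 (map f l) = f z.
Proof.
  intros Hl Hf. induction l as [|a l IH]; [congruence|].
  destruct l as [|b l'].
  - exists a. simpl. split; auto. apply Rmax_left. apply Hf.
  - destruct IH as [z [Hz E]]; [discriminate|].
    change (fold_right Rmax 0 (map f (a :: b :: l'))) with
      (Rmax (f a) (fold_right Rmax 0 (map f (b :: l')))).
    rewrite E. destruct (Rle_dec (f a) (f z)).
    + exists z. split; [right; auto|]. apply Rmax_right; auto.
    + exists a. split; [left; auto|]. apply Rmax_left; lra.
Qed.

Lemma fold_min_le a l x : In x l -> fold_right Rmin a l <= x.
Proof.
  induction l; simpl; [tauto|]. intros [->|H].
  - apply Rmin_l.
  - eapply Rle_trans; [apply Rmin_r|auto].
Qed.

Lemma basis_ne n : basis n <> [].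
Proof. unfold basis. pose proof (Nat.pow_nonzero 2 n ltac:(lia)).
  destruct (2 ^ n)%nat; [lia|]. simpl. discriminate. Qed.

Lemma pow2_pos n : 0 < 2 ^ n.
Proof. apply pow_lt. lra. Qed.

Lemma maxfracC_attained n a : exists z1, In z1 (basis n) /\
  maxfracC n a = INR (countC n a (a z1)) / 2 ^ n.
Proof.
  apply fold_max_attained. apply basis_ne. intro x.
  unfold Rdiv; apply Rmult_le_pos; [apply pos_INR|apply Rlt_le, Rinv_0_lt_compat, pow2_pos].
Qed.

Lemma deltaH_attained n Hd : exists z2, In z2 (basis n) /\
  deltaH n Hd = INR (countR n Hd (Hd z2)) / 2 ^ n.
Proof.
  apply fold_max_attained. apply basis_ne. intro x.
  unfold Rdiv; apply Rmult_le_pos; [apply pos_INR|apply Rlt_le, Rinv_0_lt_compat, pow2_pos].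
Qed.

Lemma Ceqb_true a b : Ceqb a b = true -> a = b.
Proof. unfold Ceqb. destruct (Req_EM_T (fst a) (fst b)); [|discriminate].
  destruct (Req_EM_T (snd a) (snd b)); [|discriminate].
  intros _. destruct a, b; simpl in *; subst; auto. Qed.

Lemma Ceqb_refl a : Ceqb a a = true.
Proof. unfold Ceqb. destruct (Req_EM_T (fst a) (fst a)); [|congruence].
  destruct (Req_EM_T (snd a) (snd a)); congruence. Qed.

Lemma Reqb_true a b : Reqb a b = true -> a = b.
Proof. unfold Reqb. destruct (Req_EM_T a b); congruence. Qed.

Lemma count_lemma (A B : nat -> bool) l :
  (length (filter (fun w => negb (A w && B w)) l) + length (filter A l)
   + length (filter B l) <= 2 * length l)%nat.
Proof. induction l; simpl; auto. destruct (A a), (B a); simpl; lia. Qed.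

Lemma sum_bound (P : nat -> bool) f Bd l :
  (forall w, In w l -> P w = false -> f w = 0) -> (forall w, In w l -> f w <= Bd) ->
  sumC l f <= INR (length (filter P l)) * Bd.
Proof.
  induction l as [|a l IH]; intros H1 H2; unfold sumC in *; simpl; [lra|].
  assert (IH' : fold_right (fun w acc => f w + acc) 0 l <= INR (length (filter P l)) * Bd)
    by (apply IH; [intros w Hw; apply H1; right; auto|intros w Hw; apply H2; right; auto]).
  destruct (P a) eqn:E.
  - simpl length. rewrite S_INR. pose proof (H2 a (or_introl eq_refl)). lra.
  - rewrite (H1 a (or_introl eq_refl) E). lra.
Qed.

Lemma len_basis n : INR (length (basis n)) = 2 ^ n.
Proof. unfold basis. rewrite length_seq, pow_INR. reflexivity. Qed.

Lemma step n Hd beta gamma t M D :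
  D <= maxfracC n (qaoa n Hd beta gamma t) ->
  (forall z, (z < 2 ^ n)%nat -> Cnorm (qaoa n Hd beta gamma t z) <= M) ->
  forall z, (z < 2 ^ n)%nat ->
  Cnorm (qaoa n Hd beta gamma (S t) z) <=
    M * (2 * 2 ^ n * (2 - D - deltaH n Hd) + 1).
Proof.
  intros HD HM z Hz.
  set (psi := qaoa n Hd beta gamma t) in *.
  destruct (maxfracC_attained n psi) as [z1 [Hz1 E1]].
  destruct (deltaH_attained n Hd) as [z2 [Hz2 E2]].
  set (u := psi z1) in *. set (l := Hd z2) in *.
  set (g := gamma (S t)). set (b := beta (S t)).
  set (c := Cmul (cos (g * l), - sin (g * l)) u).
  set (phi := UC Hd g psi).
  assert (HM0 : 0 <= M).
  { eapply Rle_trans; [apply Cnorm_ge0|apply (HM 0%nat)]. pose proof (Nat.pow_nonzero 2 n); lia. }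
  assert (Hq : qaoa n Hd beta gamma (S t) z = G b n 0 phi z) by reflexivity.
  rewrite Hq.
  assert (Hsplit : G b n 0 phi z = Cadd (Cmul (wp b n) c) (Csub (G b n 0 phi z) (Cmul (wp b n) c))).
  { unfold Cadd, Csub. destruct (G b n 0 phi z), (Cmul (wp b n) c); simpl; f_equal; ring. }
  rewrite Hsplit. eapply Rle_trans; [apply Cnorm_add|].
  rewrite Cnorm_mul, wp_norm, Rmult_1_l.
  assert (Hc : Cnorm c <= M).
  { unfold c. rewrite Cnorm_mul, Cnorm_cs, Rmult_1_l. apply HM.
    unfold basis in Hz1. apply in_seq in Hz1. lia. }
  pose proof (key b n 0 phi c z) as Hk.
  rewrite (sumC_perm _ _ _ (orb_perm n z Hz)) in Hk.
  set (A := fun w => Ceqb (psi w) u). set (B := fun w => Reqb (Hd w) l).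
  assert (Hs : sumC (basis n) (fun w => Cnorm (Csub (phi w) c)) <=
     INR (length (filter (fun w => negb (A w && B w)) (basis n))) * (2 * M)).
  { apply sum_bound.
    - intros w _ Hw. destruct (A w) eqn:EA, (B w) eqn:EB; try discriminate.
      apply Ceqb_true in EA. apply Reqb_true in EB.
      unfold phi, UC. rewrite EA, EB. fold c.
      unfold Cnorm, Csub. simpl. replace (_ * _ + _ * _) with 0 by ring. apply sqrt_0.
    - intros w Hw. eapply Rle_trans; [apply Cnorm_sub|].
      unfold phi, UC. rewrite Cnorm_mul, Cnorm_cs, Rmult_1_l.
      assert (Cnorm (psi w) <= M). { apply HM. unfold basis in Hw. apply in_seq in Hw. lia. }
      lra. }
  pose proof (count_lemma A B (basis n)) as Hcnt.
  apply (proj1 (Nat.le_ngt _ _)) in Hcnt. apply Nat.nlt_ge in Hcnt.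
  apply le_INR in Hcnt. rewrite !plus_INR, mult_INR, len_basis in Hcnt.
  assert (EC : INR (length (filter A (basis n))) = maxfracC n psi * 2 ^ n).
  { rewrite E1. change (INR (length (filter A (basis n)))) with (INR (countC n psi u)). field. apply Rgt_not_eq, pow2_pos. }
  assert (ER : INR (length (filter B (basis n))) = deltaH n Hd * 2 ^ n).
  { rewrite E2. change (INR (length (filter B (basis n)))) with (INR (countR n Hd l)). field. apply Rgt_not_eq, pow2_pos. }
  rewrite EC, ER in Hcnt. simpl (INR 2) in Hcnt.
  pose proof (pow2_pos n).
  set (cnt := INR (length (filter (fun w => negb (A w && B w)) (basis n)))) in *.
  assert (cnt <= 2 * 2 ^ n - D * 2 ^ n - deltaH n Hd * 2 ^ n) by nra.
  nra.
Qed.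

Lemma filter_all (f : nat -> bool) l : (forall x, f x = true) -> filter f l = l.
Proof. intro H; induction l; simpl; auto. rewrite H, IHl; auto. Qed.

Theorem proposition2 (n : nat) (Hd : nat -> R) (beta gamma : nat -> R) :
  DeltaQ n Hd beta gamma 0 = 1 /\
  forall (p z : nat), (1 <= p)%nat -> (z < 2 ^ n)%nat ->
    Cnorm (qaoa n Hd beta gamma p z) <=
      (2 ^ (n + 1) * (2 - DeltaQ n Hd beta gamma (p - 1) - deltaH n Hd) + 1) ^ p
      * (1 / sqrt (2 ^ n)).
Proof.
  split.
  - unfold DeltaQ. simpl. rewrite Rmin_left by lra.
    destruct (maxfracC_attained n (psi0 n)) as [z1 [_ E]]. rewrite E.
    unfold countC. rewrite filter_all by (intro; apply Ceqb_refl).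
    rewrite len_basis. field. apply Rgt_not_eq, pow2_pos.
  - intros p z Hp Hz.
    set (D := DeltaQ n Hd beta gamma (p - 1)).
    set (K := 2 ^ (n + 1) * (2 - D - deltaH n Hd) + 1).
    assert (HK : K = 2 * 2 ^ n * (2 - D - deltaH n Hd) + 1).
    { unfold K. rewrite pow_add. simpl. ring. }
    assert (Hall : forall t, (t <= p)%nat -> forall z, (z < 2 ^ n)%nat ->
      Cnorm (qaoa n Hd beta gamma t z) <= K ^ t * (1 / sqrt (2 ^ n))).
    { induction t; intros Ht w Hw.
      - simpl. unfold psi0, Cnorm; simpl.
        replace (1 / sqrt (2 ^ n) * (1 / sqrt (2 ^ n)) + 0 * 0)
          with (Rsqr (1 / sqrt (2 ^ n))) by (unfold Rsqr; ring).
        rewrite sqrt_Rsqr. lra.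
        unfold Rdiv. apply Rmult_le_pos; [lra|]. apply Rlt_le, Rinv_0_lt_compat, sqrt_lt_R0, pow2_pos.
      - replace (K ^ S t * (1 / sqrt (2 ^ n))) with
          ((K ^ t * (1 / sqrt (2 ^ n))) * (2 * 2 ^ n * (2 - D - deltaH n Hd) + 1))
          by (rewrite <- HK; simpl; ring).
        apply step; auto.
        + unfold D, DeltaQ. apply fold_min_le. apply (in_map (fun t => maxfracC n (qaoa n Hd beta gamma t))). apply in_seq. lia.
        + intros; apply IHt; auto. lia. }
    apply Hall; auto.
Qed.
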